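(* In the stochastic epidemic model described in the context, let $u(k)=K\,I(k)$ for all $k\ge0$ with a constant gain $0\le K\le (1-d_{\max})/v_{\max}$. Then for $k=1,2,\dots,\lfloor S_0/(\delta_{\max}I_0)\rfloor$, $$\mathbb{E}[S(k)]=\begin{cases} S_0-\dfrac{\overline{\delta}\,I_0\left(1-(1+\overline{\delta}-\overline{d_I}-K\overline{v})^k\right)}{K\overline{v}-\overline{\delta}+\overline{d_I}}, & K\overline{v}>\overline{\delta}-\overline{d_I},\\[2mm] S_0-I_0\,\overline{\delta}\,k, & K\overline{v}=\overline{\delta}-\overline{d_I}.\end{cases}$$
   Context: Time is indexed by days $k=0,1,2,\dots$. Let $(\delta(k))_{k\ge0}$, $(d_I(k))_{k\ge0}$, $(v(k))_{k\ge0}$ be three mutually independent sequences of random variables, each sequence i.i.d. in $k$, with $0\le \delta(k)\le \delta_{\max}$ (where $\delta_{\max}>0$), $0\le d_I(k)\le d_{\max}$ where $d_{\max}<1$, and $0<v_{\min}\le v(k)\le v_{\max}\le 1$. Write $\overline{\delta}=\mathbb{E}[\delta(k)]$, $\overline{d_I}=\mathbb{E}[d_I(k)]$, $\overline{v}=\mathbb{E}[v(k)]$. Given a control sequence $u(k)$, the cases evolve by $S(k+1)=S(k)-\delta(k)I(k)$, $I(k+1)=(1+\delta(k))I(k)-v(k)u(k)-d_I(k)I(k)$, $R(k+1)=R(k)+v(k)u(k)$, $D(k+1)=D(k)+d_I(k)I(k)$, with $S(0)=S_0$, $I(0)=I_0>0$, $R(0)=D(0)=0$, $I_0\delta_{\max}<S_0$.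 $\lfloor z\rfloor=\max\{n\in\mathbb{Z}:n\le z\}$. *)

(* Defs.v *)
From HB Require Import structures.
From mathcomp Require Import all_boot all_order all_algebra.
From mathcomp Require Import all_classical all_reals all_analysis.
Set Implicit Arguments. Unset Strict Implicit. Unset Printing Implicit Defensive.
Import Order.TTheory GRing.Theory Num.Theory.
Local Open Scope classical_set_scope.
Local Open Scope ring_scope.

Section Defs.
Context {d : measure_display} {T : measurableType d} {R : realType}.
Variable P : probability T R.

Definition mutually_independent (I : eqType) (X : I -> {RV P >-> R}) : Prop :=
  forall (J : seq I) (B : I -> set R), uniq J ->
    (forall i, measurable (B i)) ->
    P (\bigcap_(i in [set` J]) (X i @^-1` B i)) =
    \big[*%E/1%E]_(i <- J) P (X i @^-1` B i).

Definition ident_distributed (X : nat -> {RV P >-> R}) : Prop :=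
  forall k (B : set R), measurable B -> P (X k @^-1` B) = P (X 0 @^-1` B).

(* The three noise sequences delta, d_I, v gathered into a single family,
   so that "the three sequences are mutually independent, each one i.i.d."
   is expressed by mutual independence of the whole family. *)
Definition noise_family (delta dI v : nat -> {RV P >-> R})
    (i : ((nat + nat) + nat)%type) : {RV P >-> R} :=
  match i with
  | inl (inl k) => delta k
  | inl (inr k) => dI k
  | inr k => v k
  end.
End Defs.

Fixpoint epid_state {T : Type} {R : realType} (delta dI v : nat -> T -> R)
    (ctrl : R -> R) (S0 I0 : R) (k : nat) (w : T) : R * R * R * R :=
  match k with
  | 0%N => (S0, I0, 0, 0)
  | k'.+1 =>
      let: (Sk, Ik, Rk, Dk) := epid_state delta dI v ctrl S0 I0 k' w in
      let u := ctrl Ik in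
      (Sk - delta k' w * Ik,
       (1 + delta k' w) * Ik - v k' w * u - dI k' w * Ik,
       Rk + v k' w * u,
       Dk + dI k' w * Ik)
  end.

Definition S_of {T : Type} {R : realType} (delta dI v : nat -> T -> R)
  (ctrl : R -> R) (S0 I0 : R) (k : nat) (w : T) : R :=
  (epid_state delta dI v ctrl S0 I0 k w).1.1.1.

(* Main.v *)
Require Import Defs.
From HB Require Import structures.
From mathcomp Require Import all_boot all_order all_algebra.
From mathcomp Require Import all_classical all_reals all_analysis.
From mathcomp Require Import measurable_realfun.
From mathcomp Require Import ring lra.
Import Order.TTheory GRing.Theory Num.Theory.
Local Open Scope classical_set_scope.
Local Open Scope ring_scope.
Section core.
Context {d : measure_display} {T : measurableType d} {R : realType}
  (P : probability T R).
Variable Z : T -> R.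
Hypothesis mZ : measurable_fun setT Z.
Hypothesis Z0 : forall x, 0 <= Z x.

Let a n := approx setT (EFin \o Z) n.
Let SA n k : set R := if (k < n * 2 ^ n)%N then [set` @dyadic_itv R n k] else set0.
Let Ak n k := Z @^-1` SA n k.
Let Bn (n : nat) := Z @^-1` [set` `[(n%:R : R), +oo[].

Lemma mSA n k : measurable (SA n k).
Proof. rewrite /SA; case: ifP => _ //; exact: measurable_itv. Qed.

Lemma mpre (S : set R) : measurable S -> measurable (Z @^-1` S).
Proof. by move=> mS; rewrite -[_ @^-1` _]setTI; apply: mZ. Qed.

Lemma mBn n : measurable (Bn n).
Proof. by apply: mpre; exact: measurable_itv. Qed.

Lemma approxE n x : a n x =
  \sum_(k < n * 2 ^ n) (k%:R * 2 ^- n) * \1_(Ak n k) x + n%:R * \1_(Bn n) x.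
Proof.
rewrite /a /approx; congr (_ + _).
  apply: eq_bigr => k _; congr (_ * _); congr (\1_ _ x).
  rewrite /dyadic_approx /Ak /SA; case: ifP => _; last by rewrite preimage_set0.
  rewrite setTI; apply/seteqP; split => y /=; rewrite inE /=.
    by case=> r rI [<-].
  by move=> h; exists (Z y).
congr (_ * _); congr (\1_ _ x).
rewrite /integer_approx /Bn setTI; apply/seteqP; split => y /=; rewrite in_itv /= andbT lee_fin //.
Qed.

Lemma mA n k : measurable (Ak n k).
Proof. by apply: mpre; apply: mSA. Qed.

Lemma mEZ : measurable_fun [set: T] (EFin \o Z).
Proof. exact/measurable_EFinP. Qed.

Lemma ma n : measurable_fun setT (a n).
Proof.
have -> : a n = fun x => \sum_(k < n * 2 ^ n) (k%:R * 2 ^- n) * \1_(Ak n k) x + n%:R * \1_(Bn n) x.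
  by apply/funext => x; rewrite approxE.
apply: measurable_funD.
  apply: measurable_sum => k _; apply: measurable_funM => //.
  exact: measurable_indic (mA n k).
apply: measurable_funM => //; exact: measurable_indic (mBn n).
Qed.

Lemma a0 n x : 0 <= a n x.
Proof.
rewrite approxE; apply: addr_ge0; first apply: sumr_ge0 => k _.
  by apply: mulr_ge0; [apply: mulr_ge0 | rewrite indicE].
by apply: mulr_ge0; rewrite // indicE.
Qed.

Lemma int_decomp (Y : T -> R) : measurable_fun setT Y -> (forall x, 0 <= Y x) ->
  forall n, (\int[P]_x (a n x * Y x)%:E =
  \sum_(k < n * 2 ^ n) (k%:R * 2 ^- n)%:E * \int[P]_x (\1_(Ak n k) x * Y x)%:E
   + n%:R%:E * \int[P]_x (\1_(Bn n) x * Y x)%:E)%E.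
Proof.
move=> mY Y0 n.
under eq_integral do rewrite approxE mulrDl mulr_suml EFinD -sumEFin.
rewrite ge0_integralD //.
rewrite ge0_integral_sum //.
congr (_ + _)%E.
  apply: eq_bigr => k _.
  rewrite (eq_integral (fun x => (k%:R * 2 ^- n)%:E * (\1_(Ak n k) x * Y x)%:E)%E); last first.
    by move=> x _; rewrite -EFinM mulrA.
  rewrite ge0_integralZl_EFin //.
  - by move=> x _; rewrite lee_fin mulr_ge0 // indicE.
  - by apply/measurable_EFinP; apply: measurable_funM => //; exact: measurable_indic (mA n k).
rewrite (eq_integral (fun x => (n%:R)%:E * (\1_(Bn n) x * Y x)%:E)%E); last first.
  by move=> x _; rewrite -EFinM mulrA.
rewrite ge0_integralZl_EFin //.
- by move=> x _; rewrite lee_fin mulr_ge0 // indicE.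
- by apply/measurable_EFinP; apply: measurable_funM => //; exact: measurable_indic (mBn n).
- move=> k; apply/measurable_EFinP; apply: measurable_funM => //.
  apply: measurable_funM => //; exact: measurable_indic (mA n k).
- by move=> k x _; rewrite lee_fin !mulr_ge0 // indicE.
- by move=> x _; apply: sume_ge0 => k _; rewrite lee_fin !mulr_ge0 // indicE.
- apply: emeasurable_sum => k; apply/measurable_EFinP; apply: measurable_funM => //.
  apply: measurable_funM => //; exact: measurable_indic (mA n k).
- by move=> x _; rewrite lee_fin !mulr_ge0 // indicE.
- apply/measurable_EFinP; apply: measurable_funM => //.
  apply: measurable_funM => //; exact: measurable_indic (mBn n).
Qed.

Lemma cvg_aY (Y : T -> R) : measurable_fun setT Y -> (forall x, 0 <= Y x) ->
  (\int[P]_x (a n x * Y x)%:E)%E @[n --> \oo] --> (\int[P]_x (Z x * Y x)%:E)%E.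
Proof.
move=> mY Y0.
have H := @cvg_monotone_convergence _ _ _ P setT measurableT
  (fun n x => (a n x * Y x)%:E)%E.
move: H; rewrite (_ : (\int[P]_(x in setT) _)%E = (\int[P]_x (Z x * Y x)%:E)%E); last first.
  apply: eq_integral => x _.
  apply: cvg_lim => //.
  apply: cvg_EFin; first by apply: nearW.
  apply: (@cvgMl _ _ _ _ (fun n => a n x)).
  have := @cvg_approx _ _ _ setT (EFin \o Z) x (fun y _ => Z0 y) Logic.I (ltry _).
  by [].
apply.
- move=> n; apply/measurable_EFinP; apply: measurable_funM => //; exact: ma.
- by move=> n x _; rewrite lee_fin mulr_ge0 // a0.
- move=> x _ m n mn; rewrite lee_fin ler_wpM2r //.
  exact/lefP/nd_approx.
Qed.

Lemma core_mul (Y : T -> R) : measurable_fun setT Y -> (forall x, 0 <= Y x) ->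
  (\int[P]_x (Y x)%:E)%E \is a fin_num ->
  (forall A : set R, measurable A ->
     (\int[P]_x (\1_(Z @^-1` A) x * Y x)%:E = P (Z @^-1` A) * \int[P]_x (Y x)%:E)%E) ->
  (\int[P]_x (Z x * Y x)%:E = \int[P]_x (Z x)%:E * \int[P]_x (Y x)%:E)%E.
Proof.
move=> mY Y0 cYf HY.
have m1 : measurable_fun setT (cst 1 : T -> R) by exact: measurable_cst.
have c10 : forall x : T, 0 <= (cst 1 : T -> R) x by move=> x; exact: ler01.
have I1 (A : set T) : measurable A -> (\int[P]_x (\1_A x * cst 1 x)%:E = P A)%E.
  move=> mA'; under eq_integral do rewrite /= mulr1.
  by rewrite integral_indic // setIT.
have E n : (\int[P]_x (a n x * Y x)%:E = \int[P]_x (a n x * cst 1 x)%:E * \int[P]_x (Y x)%:E)%E.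
  rewrite int_decomp // int_decomp //.
  rewrite ge0_muleDl; first last.
  - by rewrite mule_ge0 // integral_ge0 // => x _; rewrite lee_fin /= mulr1 indicE.
  - apply: sume_ge0 => k _; rewrite mule_ge0 // ?lee_fin ?mulr_ge0 //.
    by rewrite integral_ge0 // => x _; rewrite lee_fin /= mulr1 indicE.
  rewrite ge0_sume_distrl; last first.
    move=> k _; rewrite mule_ge0 // ?lee_fin ?mulr_ge0 //.
    by rewrite integral_ge0 // => x _; rewrite lee_fin /= mulr1 indicE.
  congr (_ + _)%E.
    apply: eq_bigr => k _.
    rewrite HY; last exact: mSA.
    rewrite muleA; congr (_ * _ * _)%E; symmetry; exact: (I1 _ (mA n k)).
  rewrite HY; last exact: measurable_itv.
  rewrite muleA; congr (_ * _ * _)%E; symmetry; exact: (I1 _ (mBn n)).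
have h1 := cvg_aY Y mY Y0.
have h0 := cvg_aY (cst 1) m1 c10.
have h2 : (\int[P]_x (a n x * Y x)%:E)%E @[n --> \oo] -->
    (\int[P]_x (Z x * cst 1 x)%:E * \int[P]_x (Y x)%:E)%E.
  under eq_fun do rewrite E.
  exact: cvgeZr.
have -> : (\int[P]_x (Z x)%:E = \int[P]_x (Z x * cst 1 x)%:E)%E.
  by under [RHS]eq_integral do rewrite /= mulr1.
rewrite -(cvg_lim _ h2) //; symmetry; exact: (cvg_lim _ h1).
Qed.
End core.

Section indep.
Context {d : measure_display} {T : measurableType d} {R : realType}
  (P : probability T R).
Local Notation I := ((nat + nat) + nat)%type.
Variable X : I -> {RV P >-> R}.
Hypothesis Hind : mutually_independent X.
Hypothesis X0 : forall i x, 0 <= X i x.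
Variable m : I -> R.
Hypothesis Em : forall i, (\int[P]_x (X i x)%:E)%E = (m i)%:E.

Definition CC (L : seq I) (B : I -> set R) : set T :=
  \bigcap_(i in [set` L]) (X i @^-1` B i).

Lemma CC_cons j L B : CC (j :: L) B = X j @^-1` B j `&` CC L B.
Proof. by rewrite /CC !bigcap_seq big_cons. Qed.

Lemma mCC L B : (forall i, measurable (B i)) -> measurable (CC L B).
Proof.
move=> mB; elim: L => [|j L IH].
  by rewrite /CC bigcap_seq big_nil.
rewrite CC_cons; apply: measurableI => //.
by rewrite -[_ @^-1` _]setTI; apply: (measurable_funP (X j)).
Qed.

Lemma CC_eq L B B' : (forall i, i \in L -> B i = B' i) -> CC L B = CC L B'.
Proof.
move=> h; rewrite /CC !bigcap_seq; apply: eq_big_seq => i iL.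
by rewrite h.
Qed.

Lemma prod_indep (J L : seq I) (B : I -> set R) :
  uniq (J ++ L) -> (forall i, measurable (B i)) ->
  (\int[P]_x ((\prod_(i <- J) X i x) * \1_(CC L B) x)%:E =
   (\prod_(i <- J) m i)%:E * P (CC L B))%E.
Proof.
elim: J L B => [|j J IH] L B uJL mB.
  under eq_integral do rewrite big_nil mul1r.
  by rewrite integral_indic ?setIT ?big_nil ?mul1e //; exact: mCC.
have mXj : measurable_fun setT (X j) := measurable_funP (X j).
move: uJL; rewrite /= mem_cat negb_or -andbA => /and3P[jJ jL uJL].
have uL : uniq L by move: uJL; rewrite cat_uniq => /and3P[].
have IH0 := IH L B uJL mB.
pose Y := fun x => \prod_(i <- J) X i x * \1_(CC L B) x.
have mY : measurable_fun setT Y.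
  apply: measurable_funM; last exact: measurable_indic (mCC L B mB).
  by apply: measurable_prod => i _; exact: measurable_funP.
have Y0 : forall x, 0 <= Y x.
  by move=> x; rewrite /Y mulr_ge0 ?indicE // prodr_ge0.
have mC := mCC L B mB.
have PCfin : P (CC L B) \is a fin_num by rewrite ge0_fin_numE // (le_lt_trans (probability_le1 P mC)) // ltry.
have cYf : (\int[P]_x (Y x)%:E)%E \is a fin_num by rewrite /Y IH0 fin_numM.
have HY : forall A : set R, measurable A ->
    (\int[P]_x (\1_(X j @^-1` A) x * Y x)%:E = P (X j @^-1` A) * \int[P]_x (Y x)%:E)%E.
  move=> A mA.
  pose B' := fun i => if i == j then A else B i.
  have mB' : forall i, measurable (B' i) by move=> i; rewrite /B'; case: ifP.
  have CB : CC L B' = CC L B.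
    apply: CC_eq => i iL; rewrite /B'; case: eqP => // ij.
    by move: jL; rewrite -ij iL.
  have uJL2 : uniq (J ++ j :: L).
    have hp : perm_eq (J ++ [:: j] ++ L) ([:: j] ++ J ++ L) by rewrite perm_catCA.
    by rewrite -cat1s (perm_uniq hp) /= mem_cat negb_or jJ jL uJL.
  transitivity (\int[P]_x ((\prod_(i <- J) X i x) * \1_(CC (j :: L) B') x)%:E)%E.
    apply: eq_integral => x _; congr EFin.
    rewrite CC_cons CB indicI /B' eqxx /Y /=.
    by rewrite mulrCA.
  rewrite (IH (j :: L) B' uJL2 mB').
  have -> : P (CC (j :: L) B') = (P (X j @^-1` A) * P (CC L B))%E.
    rewrite /CC Hind //=; last by rewrite jL uL.
    rewrite big_cons /B' eqxx; congr (_ * _)%E.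
    rewrite Hind //; apply: eq_big_seq => i iL; case: eqP => // ij.
    by move: jL; rewrite -ij iL.
  by rewrite IH0 muleCA.
under eq_integral do rewrite big_cons -mulrA.
have := core_mul P (X j) mXj (X0 j) Y mY Y0 cYf HY.
rewrite /Y => ->.
by rewrite Em IH0 big_cons EFinM muleA.
Qed.

Lemma prod_indep0 (J : seq I) : uniq J ->
  (\int[P]_x (\prod_(i <- J) X i x)%:E = (\prod_(i <- J) m i)%:E)%E.
Proof.
move=> uJ.
have := prod_indep J [::] (fun=> setT) _ _.
rewrite cats0 => /(_ uJ (fun=> measurableT)).
have -> : CC [::] (fun=> setT) = setT by rewrite /CC bigcap_seq big_nil.
rewrite probability_setT mule1 => <-.
by apply: eq_integral => x _; rewrite indicT /= mulr1.
Qed.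
End indep.

Lemma ident_expect {d} {T : measurableType d} {R : realType} (P : probability T R)
  (X Y : {RV P >-> R}) :
  (forall B, measurable B -> P (X @^-1` B) = P (Y @^-1` B)) ->
  (forall x, 0 <= X x) -> (forall x, 0 <= Y x) ->
  (\int[P]_x (X x)%:E = \int[P]_x (Y x)%:E)%E.
Proof.
move=> hXY X0 Y0.
have mf : measurable_fun setT (fun y : R => (`|y|)%:E).
  by apply/measurable_EFinP; exact: normr_measurable.
have f0 : forall y : R, (0 <= (`|y|)%:E)%E by move=> y; rewrite lee_fin.
transitivity (\int[P]_x ((fun y : R => (`|y|)%:E) \o X) x)%E.
  by apply: eq_integral => x _; rewrite /= ger0_norm.
transitivity (\int[P]_x ((fun y : R => (`|y|)%:E) \o Y) x)%E; last first.
  by apply: eq_integral => x _; rewrite /= ger0_norm.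
rewrite -(ge0_integral_distribution X mf f0) -(ge0_integral_distribution Y mf f0).
apply: eq_measure_integral => A mA _.
exact: (hXY A mA).
Qed.

Definition Fp {T : Type} {R : realType} (delta dI v : nat -> T -> R) (K : R)
  (j : nat) (w : T) : R :=
  \prod_(i < j) (1 + delta i w - K * v i w - dI i w).

Lemma epid_closed {T : Type} {R : realType} (delta dI v : nat -> T -> R)
  (K S0 I0 : R) (k : nat) (w : T) :
  (epid_state delta dI v (fun I => K * I) S0 I0 k w).1.1.1 =
    S0 - I0 * \sum_(j < k) delta j w * Fp delta dI v K j w /\
  (epid_state delta dI v (fun I => K * I) S0 I0 k w).1.1.2 =
    I0 * Fp delta dI v K k w.
Proof.
elim: k => [|k IH] /=.
  by rewrite /Fp !big_ord0 mulr0 subr0 mulr1.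
move: IH; case: (epid_state delta dI v (fun I => K * I) S0 I0 k w) => [[[Sk Ik] Rk] Dk] /= [-> ->].
rewrite /Fp !big_ord_recr /=; split; ring.
Qed.

Lemma geo_sum {R : realType} (q : R) k : \sum_(j < k) q ^+ j * (1 - q) = 1 - q ^+ k.
Proof.
elim: k => [|k IH]; first by rewrite big_ord0 expr0 subrr.
by rewrite big_ord_recr /= IH exprSr; ring.
Qed.

Ltac mt := repeat first [ apply: measurable_funD | apply: measurable_funM
  | apply: measurable_funB | apply: measurable_funN | (apply: measurable_prod => ? _)
  | exact: measurable_cst | exact: measurable_funP ].

Theorem lemma10 (d : measure_display) (T : measurableType d) (R : realType)
  (P : probability T R) (delta dI v : nat -> {RV P >-> R})
  (delta_max d_max v_min v_max S0 I0 K delta_bar dI_bar v_bar : R) :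
  mutually_independent (noise_family delta dI v) ->
  ident_distributed delta -> ident_distributed dI -> ident_distributed v ->
  0 < delta_max -> d_max < 1 -> 0 < v_min -> v_min <= v_max -> v_max <= 1 ->
  (forall k w, 0 <= delta k w <= delta_max) ->
  (forall k w, 0 <= dI k w <= d_max) ->
  (forall k w, v_min <= v k w <= v_max) ->
  ('E_P[delta 0%N] = delta_bar%:E)%E ->
  ('E_P[dI 0%N] = dI_bar%:E)%E ->
  ('E_P[v 0%N] = v_bar%:E)%E ->
  0 < I0 -> I0 * delta_max < S0 ->
  0 <= K -> K <= (1 - d_max) / v_max ->
  forall k : nat, (1 <= k)%N -> (k%:Z <= Num.floor (S0 / (delta_max * I0)))%R ->
    let ES := ('E_P[S_of (fun j => delta j : T -> R) (fun j => dI j : T -> R)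
                        (fun j => v j : T -> R) (fun I => (K * I)%R) S0 I0 k])%E in
    (K * v_bar > delta_bar - dI_bar ->
       ES = (S0 - delta_bar * I0 * (1 - (1 + delta_bar - dI_bar - K * v_bar) ^+ k)
                  / (K * v_bar - delta_bar + dI_bar))%:E) /\
    (K * v_bar = delta_bar - dI_bar ->
       ES = (S0 - I0 * delta_bar * k%:R)%:E).
Proof.
move=> Hind idd iddI idv dmax0 dmax1 vmin0 vminmax vmax1 hd hdI hv Ed EdI Ev
  I00 IS0 K0 Kle k k1 kfl ES.
rewrite {}/ES.
rewrite expectation_def in Ed; rewrite expectation_def in EdI; rewrite expectation_def in Ev.
pose X := noise_family delta dI v.
pose m (i : ((nat + nat) + nat)%type) := match i with
  | inl (inl _) => delta_bar | inl (inr _) => dI_bar | inr _ => v_bar end.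
pose day (i : ((nat + nat) + nat)%type) := match i with
  | inl (inl j) => j | inl (inr j) => j | inr j => j end.
have d0 : forall j x, 0 <= delta j x by move=> j x; case/andP: (hd j x).
have dI0 : forall j x, 0 <= dI j x by move=> j x; case/andP: (hdI j x).
have v0 : forall j x, 0 <= v j x.
  by move=> j x; case/andP: (hv j x) => h _; exact: le_trans (ltW vmin0) h.
have X0 : forall i x, 0 <= X i x by case=> [[j|j]|j] x /=.
have Em : forall i, (\int[P]_x (X i x)%:E)%E = (m i)%:E.
  case=> [[j|j]|j] /=.
  - by rewrite -Ed; apply: ident_expect => //; exact: idd.
  - by rewrite -EdI; apply: ident_expect => //; exact: iddI.
  - by rewrite -Ev; apply: ident_expect => //; exact: idv.
have vmax0 : 0 < v_max by exact: lt_le_trans vmin0 vminmax.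
have Kv : K * v_max <= 1 - d_max by rewrite -ler_pdivlMr.
have a0 : forall j x, 0 <= 1 + delta j x - K * v j x - dI j x.
  move=> j x; have h1 : K * v j x <= K * v_max.
    by apply: ler_wpM2l => //; case/andP: (hv j x).
  case/andP: (hdI j x) => _ h2.
  have := d0 j x; lra.
pose F := Fp (fun j => delta j : T -> R) (fun j => dI j : T -> R) (fun j => v j : T -> R) K.
have F0 : forall j x, 0 <= F j x by move=> j x; apply: prodr_ge0 => i _; exact: a0.
have mF : forall j, measurable_fun setT (F j).
  move=> j; apply: measurable_prod => i _; mt.
have mX : forall i, measurable_fun setT (X i) by move=> ?; exact: measurable_funP.
have addI : forall f g : T -> R, measurable_fun setT f -> measurable_fun setT g ->
    (forall x, 0 <= f x) -> (forall x, 0 <= g x) ->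
    (\int[P]_x (f x + g x)%:E = \int[P]_x (f x)%:E + \int[P]_x (g x)%:E)%E.
  move=> f g mf mg f0 g0; under eq_integral do rewrite EFinD.
  apply: ge0_integralD => //.
  - by move=> x _; rewrite lee_fin.
  - exact/measurable_EFinP.
  - by move=> x _; rewrite lee_fin.
  - exact/measurable_EFinP.
have sclI : forall (f : T -> R) c, measurable_fun setT f -> (forall x, 0 <= f x) -> 0 <= c ->
    (\int[P]_x (c * f x)%:E = c%:E * \int[P]_x (f x)%:E)%E.
  move=> f c mf f0 c0; under eq_integral do rewrite EFinM.
  apply: ge0_integralZl_EFin => //.
  - by move=> x _; rewrite lee_fin.
  - exact/measurable_EFinP.
pose q := 1 + delta_bar - dI_bar - K * v_bar.
have G : forall j (J : seq ((nat + nat) + nat)%type), uniq J ->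
    (forall i, i \in J -> (j <= day i)%N) ->
    (\int[P]_x (F j x * \prod_(i <- J) X i x)%:E = (q ^+ j * \prod_(i <- J) m i)%:E)%E.
  elim=> [|jj IH] J uJ hJ.
    under eq_integral do rewrite /F /Fp big_ord0 mul1r.
    by rewrite (prod_indep0 P X Hind X0 m Em J uJ) expr0 mul1r.
  have IHW := IH J uJ (fun i iJ => ltnW (hJ i iJ)).
  have IHc : forall i0, day i0 = jj ->
      (\int[P]_x (F jj x * (X i0 x * \prod_(i <- J) X i x))%:E =
       (q ^+ jj * (m i0 * \prod_(i <- J) m i))%:E)%E.
    move=> i0 di0.
    have u2 : uniq (i0 :: J).
      rewrite /= uJ andbT; apply/negP => /hJ; rewrite di0 ltnn //.
    have h2 : forall i1, i1 \in i0 :: J -> (jj <= day i1)%N.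
      move=> i1; rewrite inE => /orP[/eqP -> | /hJ /ltnW //]; by rewrite di0.
    have := IH (i0 :: J) u2 h2; under eq_integral do rewrite big_cons; by rewrite big_cons.
  have Hd := IHc (inl (inl jj)) erefl.
  have Hv := IHc (inr jj) erefl.
  have HdI := IHc (inl (inr jj)) erefl.
  have mW : measurable_fun setT (fun x => \prod_(i <- J) X i x) by mt.
  have W0 : forall x, 0 <= \prod_(i <- J) X i x by move=> x; apply: prodr_ge0.
  have e1 : (\int[P]_x ((F jj.+1 x * \prod_(i <- J) X i x
        + K * (F jj x * (X (inr jj) x * \prod_(i <- J) X i x)))
        + F jj x * (X (inl (inr jj)) x * \prod_(i <- J) X i x))%:E =
      \int[P]_x (F jj x * \prod_(i <- J) X i x
        + F jj x * (X (inl (inl jj)) x * \prod_(i <- J) X i x))%:E)%E.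
    by apply: eq_integral => x _; congr EFin; rewrite /F /Fp big_ord_recr /=; ring.
  rewrite !addI ?sclI in e1; first last.
  all: try (by repeat first [exact: mF | exact: measurable_cst | exact: measurable_funP
     | apply: measurable_funD | apply: measurable_funM | (apply: measurable_prod => ? _)]).
  all: try (by move=> x; repeat first [exact: F0 | exact: X0 | exact: K0 | exact: W0
     | apply: addr_ge0 | apply: mulr_ge0 ]).
  move: e1; rewrite IHW Hd Hv HdI /=.
  move: (\int[P]_x (F jj.+1 x * \prod_(i <- J) X i x)%:E)%E => z.
  case: z => [r| |] //=.
  rewrite -!EFinM -!EFinD => -[hh]; congr EFin.
  set Q := q ^+ jj; set M := \prod_(i <- J) m i.
  have -> : r = Q * M + Q * (delta_bar * M) - K * (Q * (v_bar * M)) - Q * (dI_bar * M).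
    by rewrite -hh /Q /M; ring.
  by rewrite exprS -/Q /q; ring.
have Gd : forall j, (\int[P]_x (delta j x * F j x)%:E = (q ^+ j * delta_bar)%:E)%E.
  move=> j.
  have h2 : forall i, i \in [:: inl (inl j)] -> (j <= day i)%N.
    by move=> i; rewrite inE => /eqP ->.
  have u1 : uniq [:: (inl (inl j) : ((nat + nat) + nat)%type)] by [].
  have := G j _ u1 h2.
  under eq_integral do rewrite big_seq1.
  rewrite big_seq1 /= => <-.
  by apply: eq_integral => x _; rewrite mulrC.
have mG : measurable_fun setT (fun x => I0 * \sum_(j < k) delta j x * F j x).
  by repeat first [exact: mF | exact: measurable_cst | exact: measurable_funP
     | apply: measurable_funD | apply: measurable_funM | (apply: measurable_sum => ? _)].
have G0 : forall x, 0 <= I0 * \sum_(j < k) delta j x * F j x.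
  move=> x; rewrite mulr_ge0 ?(ltW I00) //; apply: sumr_ge0 => j _.
  by rewrite mulr_ge0.
have intG : (\int[P]_x (I0 * \sum_(j < k) delta j x * F j x)%:E =
    (I0 * \sum_(j < k) q ^+ j * delta_bar)%:E)%E.
  rewrite sclI ?(ltW I00) //; first last.
  - by move=> x; apply: sumr_ge0 => j _; rewrite mulr_ge0.
  - by repeat first [exact: mF | exact: measurable_funP
     | apply: measurable_funM | (apply: measurable_sum => ? _)].
  under eq_integral do rewrite -sumEFin.
  rewrite ge0_integral_sum //; first last.
  - by move=> j x _; rewrite lee_fin mulr_ge0.
  - by move=> j; apply/measurable_EFinP; apply: measurable_funM => //; exact: measurable_funP.
  under eq_bigr do rewrite Gd.
  by rewrite sumEFin -EFinM.
have ESv : ('E_P[S_of (fun j => delta j : T -> R) (fun j => dI j : T -> R)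
      (fun j => v j : T -> R) (fun I => (K * I)%R) S0 I0 k] =
    (S0 - I0 * \sum_(j < k) q ^+ j * delta_bar)%:E)%E.
  rewrite unlock /S_of.
  under eq_integral do rewrite (proj1 (epid_closed _ _ _ _ _ _ _ _)) EFinB.
  rewrite integralB_EFin //.
  - rewrite intG.
    have hc : (\int[P]_x (S0%:E) = S0%:E)%E.
      by have := expectation_cst P S0; rewrite unlock.
    by rewrite hc.
  - exact: finite_measure_integrable_cst.
  - apply/integrableP; split; first exact/measurable_EFinP.
    rewrite (eq_integral (fun x => (I0 * \sum_(j < k) delta j x * F j x)%:E)); last first.
      by move=> x _ /=; rewrite ger0_norm //; exact: G0.
    by rewrite intG ltry.
rewrite ESv; split => hq.
- congr EFin.
  have hne : K * v_bar - delta_bar + dI_bar != 0.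
    by apply/eqP => h0; move: hq; lra.
  have geo := geo_sum q k.
  rewrite -mulr_suml in geo.
  rewrite -/q -geo -mulr_suml.
  rewrite /q; field.
  exact: hne.
- have q1 : q = 1 by rewrite /q hq; ring.
  rewrite q1.
  under eq_bigr do rewrite expr1n mul1r.
  by rewrite sumr_const card_ord -mulr_natr; congr EFin; ring.
Qed.
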